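(* Let $p=2^m$ with $p\ge4$ and let $D$ be the $p\times p$ orthonormal discrete Haar wavelet basis matrix (defined in the context). Let $s\ge\log_2 p$, suppose Assumptions 1 and 2 hold with $0\le\delta_s<1$, and suppose $$T\le\frac{(a_u-a_\ell)^2\log p}{4(1+\delta_s)}.$$ Then $$\inf_{\hat f}\ \sup_{f^*\in\mathcal{F}_{T,s,D}}\mathbb{E}\big[\|\hat f-f^*\|_2^2\big]\ \ge\ \frac18,$$ where the infimum is over all measurable estimators $\hat f$ of $f^*$ based on $y$.
   Context: Setup: $n,p\ge1$ integers, $T>0$. For an orthonormal $D\in\mathbb{R}^{p\times p}$ with first column $d_1=p^{-1/2}(1,\dots,1)^\top$, let $\bar D$ be $D$ with its first column removed and $\mathcal{F}_{T,s,D}=\{f\in\mathbb{R}^p_{\ge0}:\ \|f\|_1=1,\ \|\bar D^\top f\|_0\le s\}$, $\|v\|_0$ being the number of nonzero entries. Given $A\in\mathbb{R}^{n\times p}$ and $f^*\in\mathcal{F}_{T,s,D}$, the observation is $y=(y_1,\dots,y_n)$ with independent $y_i\sim\mathrm{Poisson}(T(Af^* )_i)$; expectation is over $y$; $\log$ is the natural logarithm. Discrete Haar wavelet basis of $\mathbb{R}^{2^m}$: its columns are $2^{-m/2}(1,\dots,1)^\top$ (the first column) together with, for each level $\ell\in\{0,\dots,m-1\}$ and shift $k\in\{0,\dots,2^\ell-1\}$, the vector $\psi_{\ell,k}$ whose entries equal $2^{(\ell-m)/2}$ at indices $k2^{m-\ell}+1,\dots,k2^{m-\ell}+2^{m-\ell-1}$,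 equal $-2^{(\ell-m)/2}$ at indices $k2^{m-\ell}+2^{m-\ell-1}+1,\dots,(k+1)2^{m-\ell}$, and are $0$ elsewhere. Assumption 1: there are constants $a_\ell<a_u$ and $\widetilde A\in\mathbb{R}^{n\times p}$ with all entries in $[a_\ell/\sqrt n,a_u/\sqrt n]$ such that $A=\big(\widetilde A+\frac{a_u-2a_\ell}{\sqrt n}\mathbb{1}_{n\times p}\big)/\big(2(a_u-a_\ell)\sqrt n\big)$, with $\mathbb{1}_{n\times p}$ the all-ones matrix. Assumption 2: there is $\delta_s\ge0$ such that $\|\widetilde A D u\|_2^2\le(1+\delta_s)\|u\|_2^2$ for all $u\in\mathbb{R}^p$ with $\|u\|_0\le 2s$. *)

(* Defs.v *)
From Stdlib Require Import Reals Lra Lia Arith List.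
Open Scope R_scope.

Fixpoint fsum (n : nat) (f : nat -> R) : R :=
  match n with O => 0 | S k => fsum k f + f k end.

Fixpoint countnz (n : nat) (v : nat -> R) : nat :=
  match n with
  | O => O
  | S k => (countnz k v + (if Req_EM_T (v k) 0 then 0 else 1))%nat
  end.

(* Discrete Haar basis of R^(2^m), entry (i, j), 0-based.
   Column 0 is 2^(-m/2)(1,..,1); column j = 2^l + k (0 <= l < m, 0 <= k < 2^l)
   is psi_{l,k}. *)
Definition haar (m i j : nat) : R :=
  match j with
  | O => / sqrt (2 ^ m)
  | _ =>
    let l := Nat.log2 j in
    let k := (j - 2 ^ l)%nat in
    let w := (2 ^ (m - l))%nat in
    let h := (w / 2)%nat in
    let v := sqrt (2 ^ l / 2 ^ m) in
    if andb (Nat.leb (k * w) i) (Nat.ltb i (k * w + h)) then v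
    else if andb (Nat.leb (k * w + h) i) (Nat.ltb i ((k + 1) * w)) then - v
    else 0
  end.

(* bar D^T f, as a vector indexed 0 .. p-2 (column j+1 of D) *)
Definition DbarT (m : nat) (f : nat -> R) (j : nat) : R :=
  fsum (2 ^ m) (fun i => haar m i (S j) * f i).

Definition inF (m s : nat) (f : nat -> R) : Prop :=
  (forall j, (j < 2 ^ m)%nat -> 0 <= f j) /\
  fsum (2 ^ m) f = 1 /\
  (countnz (2 ^ m - 1) (DbarT m f) <= s)%nat.

Definition pois (lam : R) (k : nat) : R := exp (- lam) * lam ^ k / INR (fact k).

Definition lik (lam : nat -> R) (y : list nat) : R :=
  fold_right Rmult 1 (map (fun i => pois (lam i) (nth i y O)) (seq 0 (length y))).

Fixpoint boxsum (n N : nat) (F : list nat -> R) : R :=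
  match n with
  | O => F nil
  | S k => fsum (S N) (fun a => boxsum k N (fun l => F (a :: l)))
  end.

Definition mv (p : nat) (M : nat -> nat -> R) (u : nat -> R) (i : nat) : R :=
  fsum p (fun j => M i j * u j).

Definition sqnorm (n : nat) (v : nat -> R) : R := fsum n (fun i => v i ^ 2).

(* Main.v *)
Require Import Defs.
From Stdlib Require Import Reals List.
From Stdlib Require Import Lra Lia.
Open Scope R_scope.

Lemma fsum_ext n f g : (forall i, (i < n)%nat -> f i = g i) -> fsum n f = fsum n g.
Proof. induction n; simpl; intros H; auto. rewrite IHn by (intros; apply H; lia). rewrite H by lia; auto. Qed.

Lemma fsum_le n f g : (forall i, (i < n)%nat -> f i <= g i) -> fsum n f <= fsum n g.
Proof. induction n; simpl; intros H. lra. assert (f n <= g n) by (apply H; lia).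
 assert (fsum n f <= fsum n g) by (apply IHn; intros; apply H; lia). lra. Qed.

Lemma fsum_plus n f g : fsum n (fun i => f i + g i) = fsum n f + fsum n g.
Proof. induction n; simpl. lra. rewrite IHn; lra. Qed.

Lemma fsum_scal n c f : fsum n (fun i => c * f i) = c * fsum n f.
Proof. induction n; simpl. lra. rewrite IHn; lra. Qed.

Lemma fsum_const n c : fsum n (fun _ => c) = INR n * c.
Proof. induction n. simpl; lra. cbn [fsum]. rewrite IHn, S_INR. lra. Qed.

Lemma fsum_front n f : fsum (S n) f = f O + fsum n (fun i => f (S i)).
Proof. induction n; simpl in *. lra. rewrite IHn. lra. Qed.

Lemma fsum_nonneg n f : (forall i, (i < n)%nat -> 0 <= f i) -> 0 <= fsum n f.
Proof. intros H. replace 0 with (fsum n (fun _ => 0)). apply fsum_le; auto.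
 rewrite fsum_const; lra. Qed.

Lemma fsum_single n f j : (j < n)%nat -> (forall i, (i < n)%nat -> i <> j -> f i = 0) -> fsum n f = f j.
Proof. induction n; intros Hj H. lia. simpl. destruct (Nat.eq_dec j n).
 - subst. rewrite (fsum_ext n f (fun _ => 0)). rewrite fsum_const; lra.
   intros; apply H; lia.
 - rewrite IHn by (try lia; intros; apply H; lia). rewrite (H n) by lia. lra. Qed.

Lemma fsum_split a b f : fsum (a + b) f = fsum a f + fsum b (fun i => f (a + i)%nat).
Proof. induction b; simpl. rewrite Nat.add_0_r; lra. rewrite Nat.add_succ_r. simpl. rewrite IHb; lra. Qed.

Lemma fsum_sum_f N f : fsum (S N) f = sum_f_R0 f N.
Proof. induction N. simpl. lra. simpl fsum. simpl in IHN. simpl. rewrite <- IHN. lra. Qed.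

Lemma fsum_exists_gt n f c : c * INR n < fsum n f -> exists i, (i < n)%nat /\ c < f i.
Proof. intros H. destruct (Classical_Prop.classic (exists i, (i < n)%nat /\ c < f i)) as [|Hn]; auto.
 exfalso. assert (fsum n f <= fsum n (fun _ => c)). apply fsum_le. intros i Hi.
 destruct (Rle_dec (f i) c); auto. exfalso; apply Hn; exists i; split; auto; lra.
 rewrite fsum_const in H0. lra. Qed.

Lemma boxsum_ext n N F G : (forall y, F y = G y) -> boxsum n N F = boxsum n N G.
Proof. revert F G; induction n; cbn [boxsum]; intros F G H; auto.
 apply fsum_ext; intros; apply IHn; auto. Qed.

Lemma boxsum_le n N F G : (forall y, F y <= G y) -> boxsum n N F <= boxsum n N G.
Proof. revert F G; induction n; cbn [boxsum]; intros F G H; auto.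
 apply fsum_le; intros; apply IHn; auto. Qed.

Lemma boxsum_plus n N F G : boxsum n N (fun y => F y + G y) = boxsum n N F + boxsum n N G.
Proof. revert F G; induction n; cbn [boxsum]; intros F G; auto.
 rewrite <- fsum_plus. apply fsum_ext; intros; apply IHn. Qed.

Lemma boxsum_scal n N c F : boxsum n N (fun y => c * F y) = c * boxsum n N F.
Proof. revert F; induction n; cbn [boxsum]; intros F; auto.
 rewrite <- fsum_scal. apply fsum_ext; intros; apply IHn. Qed.

Lemma boxsum_zero n N : boxsum n N (fun _ => 0) = 0.
Proof. induction n; cbn [boxsum]; auto. rewrite fsum_ext with (g := fun _ => 0).
 rewrite fsum_const; lra. intros; auto. Qed.

Lemma boxsum_fsum n N M G : boxsum n N (fun y => fsum M (fun j => G j y)) = fsum M (fun j => boxsum n N (G j)).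
Proof. induction M; cbn [fsum]. apply boxsum_zero. rewrite boxsum_plus, IHM; auto. Qed.

Lemma boxsum_nonneg n N F : (forall y, 0 <= F y) -> 0 <= boxsum n N F.
Proof. intros H. rewrite <- (boxsum_zero n N). apply boxsum_le; auto. Qed.

Definition prodl (F : nat -> nat -> R) (y : list nat) : R :=
  fold_right Rmult 1 (map (fun i => F i (nth i y O)) (seq 0 (length y))).

Lemma prodl_cons F a l : prodl F (a :: l) = F O a * prodl (fun i => F (S i)) l.
Proof. unfold prodl. simpl length. cbn [seq]. rewrite <- seq_shift. cbn [map fold_right]. rewrite map_map. simpl. reflexivity. Qed.

Lemma prodl_nil F : prodl F nil = 1.
Proof. reflexivity. Qed.

Lemma prodl_mul F G y : prodl (fun i a => F i a * G i a) y = prodl F y * prodl G y.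
Proof. revert F G; induction y; intros F G. rewrite !prodl_nil; lra.
 rewrite !prodl_cons. rewrite (IHy (fun i => F (S i)) (fun i => G (S i))). lra. Qed.

Lemma prodl_inv F y : prodl (fun i a => / F i a) y = / prodl F y.
Proof. revert F; induction y; intros F. rewrite !prodl_nil; lra.
 rewrite !prodl_cons. rewrite (IHy (fun i => F (S i))). rewrite Rinv_mult. lra. Qed.

Lemma prodl_pos F y : (forall i a, 0 < F i a) -> 0 < prodl F y.
Proof. revert F; induction y; intros F H. rewrite prodl_nil; lra.
 rewrite prodl_cons. apply Rmult_lt_0_compat; auto. Qed.

Fixpoint pr (n : nat) (g : nat -> R) : R :=
  match n with O => 1 | S k => g O * pr k (fun i => g (S i)) end.

Lemma boxsum_prodl n N F : boxsum n N (prodl F) = pr n (fun k => fsum (S N) (F k)).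
Proof. revert F; induction n; intros F. simpl. apply prodl_nil.
 cbn [boxsum pr].
 transitivity (fsum (S N) (fun a => pr n (fun k => fsum (S N) (F (S k))) * F O a)).
 { apply fsum_ext. intros a Ha. rewrite <- IHn. rewrite Rmult_comm, <- boxsum_scal. apply boxsum_ext.
   intros; rewrite prodl_cons; lra. }
 rewrite fsum_scal. lra. Qed.

Lemma pr_le n g h : (forall k, (k < n)%nat -> 0 <= g k <= h k) -> pr n g <= pr n h.
Proof. revert g h; induction n; intros g h H; simpl. lra.
 assert (0 <= pr n (fun i => g (S i))).
 { clear IHn. revert g h H. induction n; intros g h H; simpl. lra. apply Rmult_le_pos.
   apply (H 1%nat); lia. apply (IHn (fun i => g (S i)) (fun i => h (S i))). intros; apply H; lia. }
 apply Rmult_le_compat; auto. apply H; lia. apply H; lia. apply IHn. intros; apply H; lia. Qed.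

Lemma pr_exp n c : pr n (fun k => exp (c k)) = exp (fsum n c).
Proof. revert c; induction n; intros c. simpl. rewrite exp_0; auto.
 rewrite fsum_front. simpl pr. rewrite IHn. rewrite exp_plus; auto. Qed.

Lemma pr_lower n g e : (forall k, (k < n)%nat -> 1 - e <= g k <= 1) -> 0 <= e <= 1 -> 1 - INR n * e <= pr n g.
Proof. revert g; induction n; intros g H He. simpl; lra. cbn [pr].
 assert (H1 : 1 - INR n * e <= pr n (fun i => g (S i))) by (apply IHn; auto; intros; apply H; lia).
 assert (H2 : pr n (fun i => g (S i)) <= 1).
 { replace 1 with (pr n (fun _ => 1)). apply pr_le. intros k Hk; assert (Hk2 := H (S k) ltac:(lia)); split; lra.
   clear. induction n; simpl; auto. rewrite IHn; lra. }
 specialize (H O ltac:(lia)). rewrite S_INR.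
 destruct (Rle_dec 0 (pr n (fun i => g (S i)))).
 - assert ((1 - g O) * (1 - pr n (fun i => g (S i))) >= 0) by (apply Rle_ge, Rmult_le_pos; lra).
   assert (0 <= INR n * e) by (apply Rmult_le_pos; [apply pos_INR | lra]). nra.
 - assert (0 <= INR n * e) by (apply Rmult_le_pos; [apply pos_INR | lra]). nra. Qed.

Import Factorial.

Lemma fact_pos a : 0 < INR (Factorial.fact a).
Proof. apply lt_0_INR. apply lt_O_fact. Qed.

Lemma pois_nonneg l a : 0 <= l -> 0 <= pois l a.
Proof. intros. unfold pois. apply Rmult_le_pos. apply Rmult_le_pos. left; apply exp_pos.
 apply pow_le; auto. left; apply Rinv_0_lt_compat, fact_pos. Qed.

Lemma pois_pos l a : 0 < l -> 0 < pois l a.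
Proof. intros. unfold pois. apply Rmult_lt_0_compat. apply Rmult_lt_0_compat. apply exp_pos.
 apply pow_lt; auto. apply Rinv_0_lt_compat, fact_pos. Qed.

Lemma E1_growing x : 0 <= x -> Un_growing (E1 x).
Proof. intros Hx n. change (E1 x (S n)) with (E1 x n + / INR (fact (S n)) * x ^ S n). assert (0 <= / INR (fact (S n)) * x ^ S n).
 apply Rmult_le_pos. left; apply Rinv_0_lt_compat, fact_pos. apply pow_le; auto. lra. Qed.

Lemma E1_le x N : 0 <= x -> E1 x N <= exp x.
Proof. intros. apply growing_ineq. apply E1_growing; auto. apply E1_cvg. Qed.

Lemma Fpois_eq l N : fsum (S N) (pois l) = exp (- l) * E1 l N.
Proof. rewrite fsum_sum_f. unfold E1. rewrite scal_sum. apply sum_eq. intros. unfold pois. lra. Qed.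

Lemma Fpois_le1 l N : 0 <= l -> fsum (S N) (pois l) <= 1.
Proof. intros. rewrite Fpois_eq. rewrite <- (exp_0). replace 0 with (-l + l) by lra.
 rewrite exp_plus. apply Rmult_le_compat_l. left; apply exp_pos. apply E1_le; auto. Qed.

Lemma Fpois_nonneg l N : 0 <= l -> 0 <= fsum (S N) (pois l).
Proof. intros; apply fsum_nonneg; intros; apply pois_nonneg; auto. Qed.

Lemma Fpois_lim l e : 0 < e -> exists N0, forall N, (N0 <= N)%nat -> 1 - e <= fsum (S N) (pois l).
Proof. intros He. destruct (E1_cvg l (e * exp l)) as [N0 HN0].
 apply Rmult_lt_0_compat; auto; apply exp_pos.
 exists N0. intros N HN. specialize (HN0 N ltac:(lia)). unfold Rdist in HN0.
 rewrite Fpois_eq. apply Rabs_def2 in HN0. destruct HN0 as [_ HN0].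
 assert (exp (-l) * exp l = 1) by (rewrite <- exp_plus; replace (-l+l) with 0 by lra; apply exp_0).
 assert (0 < exp (-l)) by apply exp_pos.
 assert (exp (-l) * (exp l - e * exp l) <= exp (-l) * E1 l N) by (apply Rmult_le_compat_l; lra).
 nra. Qed.

Lemma chi_factor l mu N : 0 <= l -> 0 < mu ->
  fsum (S N) (fun a => pois l a * pois l a * / pois mu a) <= exp ((l - mu) ^ 2 / mu).
Proof. intros Hl Hmu.
 rewrite (fsum_ext _ _ (fun a => exp (-(2*l) + mu) * (/ INR (fact a) * (l * l / mu) ^ a))).
 rewrite fsum_scal. rewrite fsum_sum_f. fold (E1 (l * l / mu) N).
 replace ((l - mu) ^ 2 / mu) with ((-(2*l) + mu) + l*l/mu) by (field; lra).
 rewrite (exp_plus (-(2*l)+mu) (l*l/mu)). apply Rmult_le_compat_l. left; apply exp_pos. apply E1_le.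
 apply Rmult_le_pos. nra. left; apply Rinv_0_lt_compat; auto.
 intros a _. unfold pois. unfold Rdiv. rewrite !Rpow_mult_distr, pow_inv.
 rewrite exp_plus. rewrite !exp_Ropp. replace (2 * l) with (l + l) by ring. rewrite exp_plus.
 assert (0 < exp l) by apply exp_pos. assert (0 < exp mu) by apply exp_pos.
 assert (0 < INR (fact a)) by apply fact_pos. assert (0 < mu ^ a) by (apply pow_lt; auto).
 field. repeat split; lra. Qed.


Lemma pow2_pos n : (0 < 2 ^ n)%nat.
Proof. induction n; simpl; lia. Qed.

Lemma haar_lvl m l k i : (l < m)%nat -> (k < 2 ^ l)%nat ->
  haar m i (2 ^ l + k)%nat =
  if Nat.eqb (i / 2 ^ (m - l - 1)) (2 * k) then sqrt (2 ^ l / 2 ^ m)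
  else if Nat.eqb (i / 2 ^ (m - l - 1)) (2 * k + 1) then - sqrt (2 ^ l / 2 ^ m) else 0.
Proof.
  intros Hl Hk.
  assert (Hp := pow2_pos l).
  assert (Hj : (2 ^ l + k = S (2 ^ l + k - 1))%nat) by lia.
  unfold haar. rewrite Hj. rewrite <- Hj.
  assert (Hlog : Nat.log2 (2 ^ l + k) = l).
  { apply Nat.log2_unique. lia. rewrite Nat.pow_succ_r'. lia. }
  rewrite Hlog. replace (2 ^ l + k - 2 ^ l)%nat with k by lia.
  set (H := (2 ^ (m - l - 1))%nat).
  assert (HH : (0 < H)%nat) by apply pow2_pos.
  assert (Hw : (2 ^ (m - l) = 2 * H)%nat).
  { unfold H. assert (E : (m - l = S (m - l - 1))%nat) by lia. rewrite E at 1. rewrite Nat.pow_succ_r'. lia. }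
  rewrite Hw. replace (2 * H / 2)%nat with H by (rewrite (Nat.mul_comm 2 H), Nat.div_mul; lia).
  set (q := (i / H)%nat).
  assert (Hq1 : (H * q <= i)%nat) by (apply Nat.Div0.mul_div_le; lia).
  assert (Hq2 : (i < H * q + H)%nat).
  { unfold q. pose proof (Nat.div_mod i H ltac:(lia)). pose proof (Nat.mod_upper_bound i H ltac:(lia)). lia. }
  clearbody q H.
  destruct (Nat.eqb_spec q (2 * k)) as [E|E].
  - subst q. destruct (Nat.leb_spec0 (k * (2 * H)) i); [|nia].
    destruct (Nat.ltb_spec0 i (k * (2 * H) + H)); [|nia]. reflexivity.
  - destruct (Nat.eqb_spec q (2 * k + 1)) as [E2|E2].
    + subst q. destruct (Nat.leb_spec0 (k * (2 * H)) i); [|nia].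
      destruct (Nat.ltb_spec0 i (k * (2 * H) + H)); [nia|]. cbn [andb].
      destruct (Nat.leb_spec0 (k * (2 * H) + H) i); [|nia].
      destruct (Nat.ltb_spec0 i ((k + 1) * (2 * H))); [|nia]. reflexivity.
    + assert (q < 2 * k \/ 2 * k + 1 < q)%nat as [Hc|Hc] by lia.
      * assert (H * q + H <= H * (2 * k))%nat by nia.
        destruct (Nat.leb_spec0 (k * (2 * H)) i); [nia|]. cbn [andb].
        destruct (Nat.leb_spec0 (k * (2 * H) + H) i); [nia|]. reflexivity.
      * assert (H * (2 * k + 2) <= H * q)%nat by nia.
        destruct (Nat.leb_spec0 (k * (2 * H)) i); cbn [andb];
        destruct (Nat.ltb_spec0 i (k * (2 * H) + H)); cbn [andb]; try nia;
        destruct (Nat.leb_spec0 (k * (2 * H) + H) i); cbn [andb];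
        destruct (Nat.ltb_spec0 i ((k + 1) * (2 * H))); cbn [andb]; try nia; reflexivity.
Qed.

Lemma div_parts a H : (0 < H)%nat -> exists K b, (a / H = 2 * K + b)%nat /\ (b < 2)%nat /\ (a / (H * 2) = K)%nat.
Proof. intros HH. exists ((a / H) / 2)%nat, ((a / H) mod 2)%nat. split. apply Nat.div_mod_eq.
 split. apply Nat.mod_upper_bound; lia. rewrite Nat.Div0.div_div; auto. Qed.

Lemma haar_lvl_sum m l i j : (l < m)%nat -> (i < 2 ^ m)%nat -> (j < 2 ^ m)%nat ->
  fsum (2 ^ l) (fun k => haar m i (2 ^ l + k)%nat * haar m j (2 ^ l + k)%nat) =
  if Nat.eqb (i / 2 ^ (m - l)) (j / 2 ^ (m - l))
  then (if Nat.eqb (i / 2 ^ (m - l - 1)) (j / 2 ^ (m - l - 1)) then 2 ^ l / 2 ^ m else - (2 ^ l / 2 ^ m))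
  else 0.
Proof.
  intros Hl Hi Hj.
  set (H := (2 ^ (m - l - 1))%nat).
  assert (HH : (0 < H)%nat) by apply pow2_pos.
  assert (Hw : (2 ^ (m - l) = H * 2)%nat).
  { unfold H. assert (E : (m - l = S (m - l - 1))%nat) by lia. rewrite E at 1. rewrite Nat.pow_succ_r'. lia. }
  assert (Hm : (2 ^ m = H * 2 * 2 ^ l)%nat).
  { rewrite <- Hw, <- Nat.pow_add_r. f_equal. lia. }
  assert (Hv : 0 <= 2 ^ l / 2 ^ m).
  { unfold Rdiv. apply Rmult_le_pos. apply pow_le; lra. left; apply Rinv_0_lt_compat, pow_lt; lra. }
  assert (Hvv := sqrt_sqrt _ Hv).
  rewrite Hw.
  destruct (div_parts i H HH) as [Ki [bi [Ei [Hbi Fi]]]].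
  destruct (div_parts j H HH) as [Kj [bj [Ej [Hbj Fj]]]].
  rewrite Fi, Fj. fold H. rewrite Ei, Ej.
  assert (HKi : (Ki < 2 ^ l)%nat).
  { rewrite <- Fi. apply Nat.Div0.div_lt_upper_bound. lia. }
  rewrite (fsum_single _ _ Ki HKi).
  - rewrite !haar_lvl by lia. fold H. rewrite Ei, Ej.
    destruct bi as [|[|]]; destruct bj as [|[|]]; try lia;
    destruct (Nat.eqb_spec Ki Kj); subst;
    repeat match goal with |- context [Nat.eqb ?a ?b] => destruct (Nat.eqb_spec a b); try lia end;
    try lra.
  - intros k Hk Hne. rewrite (haar_lvl m l k i) by lia. fold H. rewrite Ei.
    destruct (Nat.eqb_spec (2 * Ki + bi) (2 * k)); [lia|].
    destruct (Nat.eqb_spec (2 * Ki + bi) (2 * k + 1)); [lia|]. lra.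
Qed.

Lemma fsum_levels m F : fsum (2 ^ m) F = F O + fsum m (fun l => fsum (2 ^ l) (fun k => F (2 ^ l + k)%nat)).
Proof. induction m. simpl. lra.
 replace (2 ^ S m)%nat with (2 ^ m + 2 ^ m)%nat by (rewrite Nat.pow_succ_r'; lia).
 rewrite fsum_split, IHm. cbn [fsum]. lra. Qed.

Lemma haar_orth m i j : (i < 2 ^ m)%nat -> (j < 2 ^ m)%nat ->
  fsum (2 ^ m) (fun c => haar m i c * haar m j c) = if Nat.eqb i j then 1 else 0.
Proof.
  intros Hi Hj. rewrite fsum_levels.
  assert (Hp : 0 < 2 ^ m) by (apply pow_lt; lra).
  assert (H0 : haar m i O * haar m j O = / 2 ^ m).
  { unfold haar. rewrite <- Rinv_mult. rewrite sqrt_sqrt; lra. }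
  rewrite H0.
  assert (Aux : forall L, (L <= m)%nat ->
     / 2 ^ m + fsum L (fun l => fsum (2 ^ l) (fun k => haar m i (2 ^ l + k)%nat * haar m j (2 ^ l + k)%nat))
     = if Nat.eqb (i / 2 ^ (m - L)) (j / 2 ^ (m - L)) then 2 ^ L / 2 ^ m else 0).
  { induction L; intros HL.
    - simpl. rewrite Nat.sub_0_r. rewrite !Nat.div_small by lia. simpl. field. lra.
    - cbn [fsum]. rewrite <- Rplus_assoc, IHL by lia. rewrite haar_lvl_sum by lia.
      replace (m - L - 1)%nat with (m - S L)%nat by lia.
      assert (Hd : forall a, (a / 2 ^ (m - L) = (a / 2 ^ (m - S L)) / 2)%nat).
      { intros a. rewrite Nat.Div0.div_div. f_equal. replace (m - L)%nat with (S (m - S L)) by lia.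
        rewrite Nat.pow_succ_r'. lia. }
      rewrite !(Hd i), !(Hd j).
      destruct (Nat.eqb_spec (i / 2 ^ (m - S L)) (j / 2 ^ (m - S L))) as [E|E].
      + rewrite E, Nat.eqb_refl. simpl. field. lra.
      + destruct (Nat.eqb_spec (i / 2 ^ (m - S L) / 2) (j / 2 ^ (m - S L) / 2)); lra. }
  rewrite Aux by lia. rewrite Nat.sub_diag. rewrite Nat.pow_0_r, !Nat.div_1_r.
  destruct (Nat.eqb i j); [field|]; lra.
Qed.

Lemma countnz_ext n v w : (forall i, (i < n)%nat -> v i = w i) -> countnz n v = countnz n w.
Proof. induction n; simpl; intros H; auto. rewrite IHn by (intros; apply H; lia). rewrite H by lia; auto. Qed.

Lemma countnz_split a b v : countnz (a + b) v = (countnz a v + countnz b (fun i => v (a + i)%nat))%nat.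
Proof. induction b; simpl. rewrite Nat.add_0_r; lia. rewrite Nat.add_succ_r. simpl. rewrite IHb; lia. Qed.

Lemma countnz_front n v : countnz (S n) v = ((if Req_EM_T (v O) 0 then 0 else 1) + countnz n (fun i => v (S i)))%nat.
Proof. replace (S n) with (1 + n)%nat by lia. rewrite countnz_split. reflexivity. Qed.

Lemma countnz_le1 n v K : (forall i, (i < n)%nat -> v i <> 0 -> i = K) -> (countnz n v <= 1)%nat.
Proof. induction n; simpl; intros H. lia.
 destruct (Req_EM_T (v n) 0). rewrite Nat.add_0_r. apply IHn; intros; apply H; auto.
 assert (n = K) by (apply H; auto). subst.
 rewrite (countnz_ext _ _ (fun _ => 0)). clear. induction K; simpl; auto. destruct (Req_EM_T 0 0); [lia|congruence].
 intros i Hi. destruct (Req_EM_T (v i) 0); auto. assert (i = K) by (apply H; auto). lia. Qed.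

Lemma countnz_haar m j L : (j < 2 ^ m)%nat -> (L <= m)%nat -> (countnz (2 ^ L) (haar m j) <= S L)%nat.
Proof. intros Hj. induction L; intros HL. simpl. destruct (Req_EM_T _ 0); lia.
 replace (2 ^ S L)%nat with (2 ^ L + 2 ^ L)%nat by (rewrite Nat.pow_succ_r'; lia).
 rewrite countnz_split. assert (countnz (2 ^ L) (haar m j) <= S L)%nat by (apply IHL; lia).
 assert (countnz (2 ^ L) (fun i => haar m j (2 ^ L + i)%nat) <= 1)%nat; [|lia].
 apply (countnz_le1 _ _ ((j / 2 ^ (m - L - 1)) / 2)%nat). intros k Hk Hne.
 rewrite haar_lvl in Hne by lia.
 destruct (Nat.eqb_spec (j / 2 ^ (m - L - 1)) (2 * k)) as [E|E]. rewrite E.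
 rewrite Nat.mul_comm, Nat.div_mul; lia.
 destruct (Nat.eqb_spec (j / 2 ^ (m - L - 1)) (2 * k + 1)) as [E2|E2]. rewrite E2.
 replace (2 * k + 1)%nat with (1 + k * 2)%nat by lia. rewrite Nat.div_add by lia. simpl. lia.
 lra. Qed.

Lemma haar0_pos m i : 0 < haar m i O.
Proof. simpl. apply Rinv_0_lt_compat, sqrt_lt_R0, pow_lt; lra. Qed.

Lemma countnz_haar_tail m j : (j < 2 ^ m)%nat -> (countnz (2 ^ m - 1) (fun c => haar m j (S c)) <= m)%nat.
Proof. intros Hj. assert (Hc := countnz_haar m j m Hj (le_n _)).
 assert (Hp := pow2_pos m).
 replace (2 ^ m)%nat with (S (2 ^ m - 1)) in Hc by lia. rewrite countnz_front in Hc.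
 destruct (Req_EM_T (haar m j 0) 0). pose proof (haar0_pos m j); lra. lia. Qed.


Lemma boxsum_le_len n N F G : (forall y, length y = n -> F y <= G y) -> boxsum n N F <= boxsum n N G.
Proof. revert F G; induction n; cbn [boxsum]; intros F G H. apply H; reflexivity.
 apply fsum_le; intros; apply IHn; intros; apply H; simpl; auto. Qed.

Lemma prodl_nonneg F y : (forall i a, (i < length y)%nat -> 0 <= F i a) -> 0 <= prodl F y.
Proof. revert F; induction y; intros F H. rewrite prodl_nil; lra.
 rewrite prodl_cons. apply Rmult_le_pos. apply H; simpl; lia. apply IHy. intros; apply H; simpl; lia. Qed.

Lemma exp_pow_nat k x : exp x ^ k = exp (INR k * x).
Proof. induction k. simpl. rewrite Rmult_0_l, exp_0; auto.
 rewrite S_INR. simpl pow. rewrite IHk. rewrite <- exp_plus. f_equal; lra. Qed.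

Lemma exp_ln8 (P : R) : 4 <= P -> exp (ln P / 8) <= P / 2.
Proof. intros HP. set (z := exp (ln P / 8)).
 assert (Hz8 : z ^ 8 = P). { unfold z. rewrite exp_pow_nat. simpl INR.
   replace ((1+1+1+1+1+1+1+1) * (ln P / 8)) with (ln P) by field. apply exp_ln; lra. }
 destruct (Rle_dec z (P/2)) as [|Hn]; auto. exfalso.
 assert (H1 : (P/2) ^ 8 <= z ^ 8) by (apply pow_incr; lra).
 assert (H2 : 2 ^ 7 <= (P/2) ^ 7) by (apply pow_incr; lra).
 replace ((P/2)^8) with ((P/2) * (P/2)^7) in H1 by (simpl; ring).
 assert ((P/2) * 2^7 <= (P/2) * (P/2)^7) by (apply Rmult_le_compat_l; lra).
 simpl in *. lra. Qed.

Lemma fsum_ge_one n g a : (a < n)%nat -> (forall i, (i < n)%nat -> 0 <= g i) -> g a <= fsum n g.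
Proof. induction n; intros Ha H. lia. cbn [fsum]. destruct (Nat.eq_dec a n).
 - subst. assert (0 <= fsum n g) by (apply fsum_nonneg; intros; apply H; lia). lra.
 - assert (g a <= fsum n g) by (apply IHn; [lia | intros; apply H; lia]).
   assert (0 <= g n) by (apply H; lia). lra. Qed.

Lemma fsum_ge_two n g a b : (a < n)%nat -> (b < n)%nat -> a <> b -> (forall i, (i < n)%nat -> 0 <= g i) -> g a + g b <= fsum n g.
Proof. induction n; intros Ha Hb Hab H. lia. cbn [fsum].
 destruct (Nat.eq_dec a n); [|destruct (Nat.eq_dec b n)].
 - subst. assert (g b <= fsum n g) by (apply fsum_ge_one; [lia | intros; apply H; lia]). lra.
 - subst. assert (g a <= fsum n g) by (apply fsum_ge_one; [lia | intros; apply H; lia]). lra.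
 - assert (g a + g b <= fsum n g) by (apply IHn; auto; try lia; intros; apply H; lia).
   assert (0 <= g n) by (apply H; lia). lra. Qed.

Lemma fsum_indic_le1 n h : (forall j, (j < n)%nat -> h j = 0 \/ h j = 1) ->
  (forall a b, (a < n)%nat -> (b < n)%nat -> a <> b -> h a = 1 -> h b = 1 -> False) -> fsum n h <= 1.
Proof. induction n; intros H1 H2. simpl; lra. cbn [fsum].
 destruct (H1 n ltac:(lia)) as [E|E].
 - rewrite E. assert (fsum n h <= 1); [|lra]. apply IHn.
   + intros; apply H1; lia.
   + intros a b Ha Hb. apply H2; lia.
 - rewrite (fsum_ext _ _ (fun _ => 0)). rewrite fsum_const. lra.
   intros i Hi. destruct (H1 i ltac:(lia)) as [|E2]; auto. exfalso. apply (H2 i n); auto; lia.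
Qed.

Lemma uniform_N (K : nat) (R' : nat -> nat -> Prop) :
  (forall k, (k < K)%nat -> exists N0, forall N, (N0 <= N)%nat -> R' k N) ->
  exists N0, forall N, (N0 <= N)%nat -> forall k, (k < K)%nat -> R' k N.
Proof. induction K; intros H. exists O; intros; lia.
 destruct IHK as [N1 H1]. intros; apply H; lia.
 destruct (H K ltac:(lia)) as [N2 H2]. exists (Nat.max N1 N2). intros N HN k Hk.
 destruct (Nat.eq_dec k K). subst; apply H2; lia. apply H1; lia. Qed.


Lemma pr_one n : pr n (fun _ => 1) = 1.
Proof. induction n; simpl; auto. rewrite IHn; lra. Qed.

Theorem lemma2 (m n s : nat) (T al au delta : R) (At A : nat -> nat -> R) :
  (1 <= n)%nat ->
  (4 <= 2 ^ m)%nat ->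
  (m <= s)%nat ->
  0 < T ->
  (* Assumption 1 *)
  al < au ->
  (forall i j, (i < n)%nat -> (j < 2 ^ m)%nat ->
     al / sqrt (INR n) <= At i j <= au / sqrt (INR n)) ->
  (forall i j, (i < n)%nat -> (j < 2 ^ m)%nat ->
     A i j = (At i j + (au - 2 * al) / sqrt (INR n))
             / (2 * (au - al) * sqrt (INR n))) ->
  (* Assumption 2 *)
  0 <= delta < 1 ->
  (forall u : nat -> R, (countnz (2 ^ m) u <= 2 * s)%nat ->
     sqnorm n (mv (2 ^ m) At (mv (2 ^ m) (haar m) u))
       <= (1 + delta) * sqnorm (2 ^ m) u) ->
  T <= (au - al) ^ 2 * ln (INR (2 ^ m)) / (4 * (1 + delta)) ->
  (* inf over estimators of sup over f* of the risk is >= 1/8 *)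
  forall fhat : list nat -> nat -> R,
  forall c, c < 1 / 8 ->
  exists f, inF m s f /\
    exists N : nat,
      c < boxsum n N (fun y =>
            lik (fun i => T * mv (2 ^ m) A f i) y
            * sqnorm (2 ^ m) (fun j => fhat y j - f j)).
Proof.
  intros Hn Hp4 Hms HT Hal HAt HA Hdel HA2 HTb fhat c Hc.
  set (p := (2 ^ m)%nat) in *.
  assert (Hp0 : (0 < p)%nat) by lia.
  set (Mr := INR p) in *.
  assert (HMr : Mr = 2 ^ m). { unfold Mr, p. rewrite pow_INR. simpl; f_equal; lra. }
  assert (HMr4 : 4 <= Mr). { unfold Mr. replace 4 with (INR 4) by (simpl; lra). apply le_INR; lia. }
  set (sn := sqrt (INR n)) in *.
  assert (HnR : 1 <= INR n) by (replace 1 with (INR 1) by reflexivity; apply le_INR; lia).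
  assert (Hsn2 : sn * sn = INR n) by (apply sqrt_sqrt; lra).
  assert (Hsn : 0 < sn) by (apply sqrt_lt_R0; lra).
  assert (HAlow : forall k i, (k < n)%nat -> (i < p)%nat -> / (2 * INR n) <= A k i).
  { intros k i Hk Hi. rewrite HA by auto. destruct (HAt k i Hk Hi) as [H1 _].
    rewrite <- Hsn2. unfold Rdiv in *.
    apply (Rmult_le_reg_l (2 * (au - al) * sn)). nra.
    replace (2 * (au - al) * sn * ((At k i + (au - 2 * al) * / sn) * / (2 * (au - al) * sn)))
      with (At k i + (au - 2 * al) * / sn) by (field; split; lra).
    replace (2 * (au - al) * sn * / (2 * (sn * sn))) with ((au - al) * / sn) by (field; lra).
    assert (al * / sn + (au - 2 * al) * / sn = (au - al) * / sn) by (field; lra). lra. }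
  set (e := fun j i : nat => if Nat.eqb i j then 1 else 0).
  set (lam := fun j i => T * mv p A (e j) i).
  set (mu := fun k => if Nat.ltb k n then T * mv p A (fun _ => / Mr) k else 1).
  assert (Hmvej : forall j k, (j < p)%nat -> mv p A (e j) k = A k j).
  { intros j k Hj. unfold mv. rewrite (fsum_single _ _ j Hj). unfold e. rewrite Nat.eqb_refl; lra.
    intros i Hi Hne. unfold e. destruct (Nat.eqb_spec i j); [lia|lra]. }
  assert (Hlam0 : forall j k, (j < p)%nat -> (k < n)%nat -> 0 <= lam j k).
  { intros j k Hj Hk. unfold lam. rewrite Hmvej by auto. specialize (HAlow k j Hk Hj).
    assert (0 < / (2 * INR n)) by (apply Rinv_0_lt_compat; lra). nra. }
  assert (Hmulow : forall k, (k < n)%nat -> T * / (2 * INR n) <= mu k).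
  { intros k Hk. unfold mu. destruct (Nat.ltb_spec0 k n); [|lia].
    apply Rmult_le_compat_l; [lra|]. unfold mv.
    replace (/ (2 * INR n)) with (fsum p (fun _ => / (2 * INR n) * / Mr)).
    apply fsum_le. intros i Hi. apply Rmult_le_compat_r. left; apply Rinv_0_lt_compat; lra. auto.
    rewrite fsum_const. fold Mr. field. lra. }
  assert (Hmupos : forall k, 0 < mu k).
  { intros k. destruct (Nat.ltb_spec0 k n). eapply Rlt_le_trans; [|apply Hmulow; auto].
    apply Rmult_lt_0_compat; auto. apply Rinv_0_lt_compat; lra.
    unfold mu. destruct (Nat.ltb_spec0 k n); [lia|lra]. }
  set (u := fun j c : nat => if Nat.eqb c 0 then 0 else haar m j c).
  assert (Hp1 : p = S (p - 1)) by lia.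
  assert (Horth : forall i j, (i < p)%nat -> (j < p)%nat ->
     fsum (p - 1) (fun c => haar m i (S c) * haar m j (S c)) = e j i - / Mr).
  { intros i j Hi Hj. assert (H := haar_orth m i j Hi Hj). fold p in H. rewrite Hp1 in H.
    rewrite fsum_front in H. unfold e. simpl haar in H at 1 2.
    rewrite <- Rinv_mult, sqrt_sqrt in H by (apply pow_le; lra). rewrite <- HMr in H.
    lra. }
  assert (Hw : forall j i, (j < p)%nat -> (i < p)%nat -> mv p (haar m) (u j) i = e j i - / Mr).
  { intros j i Hj Hi. unfold mv. rewrite Hp1 at 1. rewrite fsum_front. rewrite <- Horth by auto.
    unfold u. simpl. lra. }
  assert (Hsqu : forall j, (j < p)%nat -> sqnorm p (u j) <= 1).
  { intros j Hj. unfold sqnorm. rewrite Hp1 at 1. rewrite fsum_front.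
    rewrite (fsum_ext _ _ (fun c => haar m j (S c) * haar m j (S c))).
    rewrite Horth by auto. unfold u, e. simpl. rewrite Nat.eqb_refl.
    assert (0 < / Mr) by (apply Rinv_0_lt_compat; lra). lra.
    intros i _. unfold u. simpl. ring. }
  assert (Hcntu : forall j, (j < p)%nat -> (countnz p (u j) <= 2 * s)%nat).
  { intros j Hj. rewrite Hp1 at 1. rewrite countnz_front. unfold u at 1. simpl Nat.eqb.
    destruct (Req_EM_T 0 0); [|congruence].
    rewrite (countnz_ext _ _ (fun c => haar m j (S c))).
    assert (H := countnz_haar_tail m j Hj). fold p in H. lia.
    intros i _. unfold u. reflexivity. }
  set (D := 2 * (au - al) * sn).
  assert (HD : 0 < D) by (unfold D; nra).
  assert (Hdiff : forall j k, (j < p)%nat -> (k < n)%nat ->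
     lam j k - mu k = T / D * mv p At (mv p (haar m) (u j)) k).
  { intros j k Hj Hk. unfold lam, mu. destruct (Nat.ltb_spec0 k n); [|lia].
    unfold mv at 1 2 3.
    rewrite (fsum_ext p (fun j0 => At k j0 * mv p (haar m) (u j) j0) (fun i => At k i * (e j i - / Mr)))
      by (intros; rewrite Hw; auto).
    rewrite (fsum_ext p (fun j0 => A k j0 * e j j0) (fun i => (At k i + (au - 2 * al) / sn) / D * e j i))
      by (intros; rewrite HA; auto).
    rewrite (fsum_ext p (fun j0 => A k j0 * / Mr) (fun i => (At k i + (au - 2 * al) / sn) / D * / Mr))
      by (intros; rewrite HA; auto).
    assert (Hs1 : fsum p (e j) = 1).
    { rewrite (fsum_single _ _ j Hj). unfold e; rewrite Nat.eqb_refl; auto.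
      intros i _ Hne. unfold e. destruct (Nat.eqb_spec i j); [lia|auto]. }
    assert (E1 : fsum p (fun i => (At k i + (au - 2 * al) / sn) / D * e j i)
       = / D * (fsum p (fun i => At k i * e j i) + (au - 2 * al) / sn * fsum p (e j))).
    { rewrite <- fsum_scal, <- fsum_plus. rewrite <- fsum_scal. apply fsum_ext; intros; unfold Rdiv; ring. }
    assert (E2 : fsum p (fun i => (At k i + (au - 2 * al) / sn) / D * / Mr)
       = / D * / Mr * (fsum p (fun i => At k i) + INR p * ((au - 2 * al) / sn))).
    { rewrite <- fsum_const, <- fsum_plus, <- fsum_scal. apply fsum_ext; intros; unfold Rdiv; ring. }
    assert (E3 : fsum p (fun i => At k i * (e j i - / Mr))
       = fsum p (fun i => At k i * e j i) - / Mr * fsum p (fun i => At k i)).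
    { replace (fsum p (fun i => At k i * e j i) - / Mr * fsum p (fun i => At k i))
        with (fsum p (fun i => At k i * e j i) + (- / Mr) * fsum p (fun i => At k i)) by ring.
      rewrite <- fsum_scal, <- fsum_plus. apply fsum_ext; intros; ring. }
    rewrite E1, E2, E3, Hs1. fold Mr. field. split; lra. }
  assert (HCj : forall j, (j < p)%nat -> fsum n (fun k => (lam j k - mu k) ^ 2 / mu k) <= ln Mr / 8).
  { intros j Hj.
    set (z := mv p At (mv p (haar m) (u j))).
    assert (Hz := HA2 (u j) (Hcntu j Hj)). fold p z in Hz.
    apply Rle_trans with (fsum n (fun k => T / (2 * (au - al) ^ 2) * z k ^ 2)).
    - apply fsum_le. intros k Hk. rewrite Hdiff by auto. fold z.
      assert (Hm := Hmulow k Hk). assert (Hm0 := Hmupos k).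
      assert (0 < T * / (2 * INR n)) by (apply Rmult_lt_0_compat; auto; apply Rinv_0_lt_compat; lra).
      apply Rle_trans with ((T / D * z k) ^ 2 / (T * / (2 * INR n))).
      + unfold Rdiv at 3 4. apply Rmult_le_compat_l. apply pow2_ge_0.
        apply Rinv_le_contravar; auto.
      + right. unfold D. rewrite <- Hsn2. field. repeat split; lra.
    - rewrite fsum_scal. unfold sqnorm in Hz.
      assert (Hsq := Hsqu j Hj). unfold sqnorm in Hsq.
      assert (0 <= T / (2 * (au - al) ^ 2)) by (unfold Rdiv; apply Rmult_le_pos; [lra|]; left; apply Rinv_0_lt_compat; nra).
      apply Rle_trans with (T / (2 * (au - al) ^ 2) * (1 + delta)).
      + apply Rmult_le_compat_l; auto. nra.
      + apply (Rmult_le_reg_r (2 * (au - al) ^ 2)). nra.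
        replace (T / (2 * (au - al) ^ 2) * (1 + delta) * (2 * (au - al) ^ 2)) with (T * (1 + delta)) by (field; nra).
        apply (Rmult_le_reg_r (/ (1 + delta))). apply Rinv_0_lt_compat; lra.
        replace (T * (1 + delta) * / (1 + delta)) with T by (field; lra).
        eapply Rle_trans; [apply HTb|]. right. field. repeat split; nra. }
  assert (HX : forall j N, (j < p)%nat ->
     boxsum n N (fun y => lik (lam j) y * lik (lam j) y * / lik mu y) <= Mr / 2).
  { intros j N Hj.
    rewrite (boxsum_ext _ _ _ (prodl (fun i a => pois (lam j i) a * pois (lam j i) a * / pois (mu i) a))).
    2:{ intros y. unfold lik. fold (prodl (fun i a => pois (lam j i) a) y). fold (prodl (fun i a => pois (mu i) a) y).
        rewrite prodl_mul, prodl_mul, prodl_inv. reflexivity. }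
    rewrite boxsum_prodl.
    apply Rle_trans with (pr n (fun k => exp ((lam j k - mu k) ^ 2 / mu k))).
    - apply pr_le. intros k Hk. split.
      + apply fsum_nonneg. intros a _. apply Rmult_le_pos. apply Rmult_le_pos; apply pois_nonneg; auto.
        left; apply Rinv_0_lt_compat, pois_pos; auto.
      + apply chi_factor; auto.
    - rewrite pr_exp. apply Rle_trans with (exp (ln Mr / 8)).
      + destruct (HCj j Hj) as [Hlt|Heq]. left; apply exp_increasing; auto. rewrite Heq; lra.
      + apply exp_ln8; auto. }
  assert (HQ : forall N, boxsum n N (lik mu) <= 1).
  { intros N. change (boxsum n N (prodl (fun i a => pois (mu i) a)) <= 1). rewrite boxsum_prodl.
    rewrite <- (pr_one n). apply pr_le. intros k Hk. split.
    apply Fpois_nonneg; left; auto. apply Fpois_le1; left; auto. }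
  set (eps := Rmin (1/2) (1/8 - c)).
  assert (Heps : 0 < eps <= 1/2 /\ eps <= 1/8 - c).
  { unfold eps. split; [split|]. apply Rmin_pos; lra. apply Rmin_l. apply Rmin_r. }
  set (eta := eps / INR n).
  assert (Heta : 0 < eta <= 1/2).
  { unfold eta. split. apply Rdiv_lt_0_compat; lra.
    apply Rle_trans with (eps / 1). unfold Rdiv. apply Rmult_le_compat_l. lra.
    apply Rinv_le_contravar; lra. lra. }
  assert (HNex : exists N0, forall N, (N0 <= N)%nat -> forall j, (j < p)%nat ->
     forall k, (k < n)%nat -> 1 - eta <= fsum (S N) (pois (lam j k))).
  { apply uniform_N. intros j Hj. apply uniform_N. intros k Hk. apply Fpois_lim. lra. }
  destruct HNex as [N HN].
  specialize (HN N (le_n N)).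
  assert (HPB : forall j, (j < p)%nat -> 1 - eps <= boxsum n N (lik (lam j))).
  { intros j Hj. change (1 - eps <= boxsum n N (prodl (fun i a => pois (lam j i) a))). rewrite boxsum_prodl.
    replace eps with (INR n * eta) by (unfold eta; field; lra). apply pr_lower; [|lra].
    intros k Hk. split. apply HN; auto. apply Fpois_le1. auto. }
  set (d := fun j y => sqnorm p (fun jj => fhat y jj - e j jj)).
  set (h := fun j y => if Rlt_dec (d j y) (1/2) then 1 else 0).
  set (P := fun j y => lik (lam j) y).
  set (Q := fun y => lik mu y).
  assert (Hd0 : forall j y, 0 <= d j y).
  { intros j y. unfold d, sqnorm. apply fsum_nonneg. intros; apply pow2_ge_0. }
  assert (Hh01 : forall j y, h j y = 0 \/ h j y = 1).
  { intros j y. unfold h. destruct (Rlt_dec _ _); auto. }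
  assert (Hdh : forall j y, (1 - h j y) / 2 <= d j y).
  { intros j y. unfold h. destruct (Rlt_dec _ _); [specialize (Hd0 j y); lra | lra]. }
  assert (Hsep : forall y a b, (a < p)%nat -> (b < p)%nat -> a <> b -> 1 <= d a y + d b y).
  { intros y a b Ha Hb Hab. unfold d, sqnorm.
    assert (H1 := fsum_ge_two p (fun jj => (fhat y jj - e a jj) ^ 2) a b Ha Hb Hab ltac:(intros; apply pow2_ge_0)).
    assert (H2 := fsum_ge_two p (fun jj => (fhat y jj - e b jj) ^ 2) a b Ha Hb Hab ltac:(intros; apply pow2_ge_0)).
    cbv beta in H1, H2. unfold e in H1, H2. rewrite Nat.eqb_refl in H1, H2.
    rewrite (proj2 (Nat.eqb_neq b a)) in H1 by lia. rewrite (proj2 (Nat.eqb_neq a b)) in H2 by lia.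
    assert (forall x, 1/2 <= (x - 1) ^ 2 + (x - 0) ^ 2) by (intros x; pose proof (Rle_0_sqr (x - 1/2)); unfold Rsqr in *; simpl; nra).
    pose proof (H (fhat y a)). pose proof (H (fhat y b)). cbv beta. unfold e. lra. }
  assert (Hhsum : forall y, fsum p (fun j => h j y) <= 1).
  { intros y. apply fsum_indic_le1. intros; auto.
    intros a b Ha Hb Hab E1 E2. assert (Hs := Hsep y a b Ha Hb Hab). revert E1 E2. unfold h.
    destruct (Rlt_dec (d a y) _); destruct (Rlt_dec (d b y) _); lra. }
  assert (HQpos : forall y, 0 < Q y).
  { intros y. unfold Q, lik. apply (prodl_pos (fun i a => pois (mu i) a)). intros; apply pois_pos; auto. }
  assert (HPnn : forall j y, (j < p)%nat -> length y = n -> 0 <= P j y).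
  { intros j y Hj Hy. unfold P, lik. apply (prodl_nonneg (fun i a => pois (lam j i) a)).
    intros i a Hi. apply pois_nonneg. apply Hlam0; lia. }
  assert (Hamgm : forall j y, P j y * h j y <= / 2 * (Mr * Q y * h j y) + / 2 * / Mr * (P j y * P j y * / Q y)).
  { intros j y. assert (Hq := HQpos y). assert (0 < Mr * Q y) by nra.
    assert (0 <= / Mr * (P j y * P j y * / Q y)).
    { replace (/ Mr * (P j y * P j y * / Q y)) with ((P j y) ^ 2 * / (Mr * Q y)) by (field; lra).
      apply Rmult_le_pos. apply pow2_ge_0. left; apply Rinv_0_lt_compat; auto. }
    destruct (Hh01 j y) as [E|E]; rewrite E. lra.
    assert (Eq : / 2 * (Mr * Q y * 1) + / 2 * / Mr * (P j y * P j y * / Q y) - P j y * 1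
       = (Mr * Q y - P j y) ^ 2 * / (2 * (Mr * Q y))) by (field; lra).
    assert (0 <= (Mr * Q y - P j y) ^ 2 * / (2 * (Mr * Q y))).
    { apply Rmult_le_pos. apply pow2_ge_0. left; apply Rinv_0_lt_compat; lra. }
    lra. }
  assert (Hupper : fsum p (fun j => boxsum n N (fun y => P j y * h j y)) <= 3 / 4 * Mr).
  { rewrite <- boxsum_fsum.
    apply Rle_trans with (boxsum n N (fun y => / 2 * Mr * Q y + / 2 * / Mr * fsum p (fun j => P j y * P j y * / Q y))).
    - apply boxsum_le. intros y.
      apply Rle_trans with (fsum p (fun j => / 2 * (Mr * Q y * h j y) + / 2 * / Mr * (P j y * P j y * / Q y))).
      + apply fsum_le; intros; apply Hamgm.
      + rewrite fsum_plus, !fsum_scal. assert (Hq := HQpos y). assert (Hs := Hhsum y).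
        assert (Mr * Q y * fsum p (fun j => h j y) <= Mr * Q y * 1) by (apply Rmult_le_compat_l; nra).
        lra.
    - rewrite boxsum_plus, !boxsum_scal, boxsum_fsum.
      assert (Hf : fsum p (fun j => boxsum n N (fun y => P j y * P j y * / Q y)) <= INR p * (Mr / 2)).
      { rewrite <- fsum_const. apply fsum_le. intros j Hj. apply HX; auto. }
      fold Mr in Hf.
      assert (0 < / Mr) by (apply Rinv_0_lt_compat; lra).
      assert (/ Mr * fsum p (fun j => boxsum n N (fun y => P j y * P j y * / Q y)) <= / Mr * (Mr * (Mr / 2)))
        by (apply Rmult_le_compat_l; lra).
      replace (/ Mr * (Mr * (Mr / 2))) with (Mr / 2) in H0 by (field; lra).
      assert (Mr * boxsum n N Q <= Mr * 1) by (apply Rmult_le_compat_l; [lra|]; apply HQ).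
      lra. }
  set (Rj := fun j => boxsum n N (fun y => lik (lam j) y * sqnorm p (fun jj => fhat y jj - e j jj))).
  assert (Hlow : forall j, (j < p)%nat -> / 2 * boxsum n N (P j) - / 2 * boxsum n N (fun y => P j y * h j y) <= Rj j).
  { intros j Hj. unfold Rj.
    apply Rle_trans with (boxsum n N (fun y => / 2 * P j y + (- / 2) * (P j y * h j y))).
    - rewrite boxsum_plus, !boxsum_scal. lra.
    - apply boxsum_le_len. intros y Hy. fold (P j y). fold (d j y).
      assert (Hp' := HPnn j y Hj Hy). assert (Hdd := Hdh j y).
      assert (P j y * ((1 - h j y) / 2) <= P j y * d j y) by (apply Rmult_le_compat_l; auto). lra. }
  assert (Hsum : c * INR p < fsum p Rj).
  { apply Rlt_le_trans with (fsum p (fun j => / 2 * boxsum n N (P j) - / 2 * boxsum n N (fun y => P j y * h j y))).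
    2:{ apply fsum_le; auto. }
    replace (fsum p (fun j => / 2 * boxsum n N (P j) - / 2 * boxsum n N (fun y => P j y * h j y)))
      with (/ 2 * fsum p (fun j => boxsum n N (P j)) + (- / 2) * fsum p (fun j => boxsum n N (fun y => P j y * h j y))).
    2:{ rewrite <- !fsum_scal, <- fsum_plus. apply fsum_ext; intros; ring. }
    assert (HPs : INR p * (1 - eps) <= fsum p (fun j => boxsum n N (P j))).
    { rewrite <- fsum_const. apply fsum_le. intros j Hj. apply HPB; auto. }
    fold Mr in HPs. assert (0 < Mr * (1/16 - c/2)) by (apply Rmult_lt_0_compat; lra). assert (Mr * eps <= Mr * (1/8 - c)) by (apply Rmult_le_compat_l; lra). fold Mr. lra. }
  destruct (fsum_exists_gt p Rj c Hsum) as [j [Hj Hcj]].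
  exists (e j). split.
  - split; [|split].
    + intros i _. unfold e. destruct (Nat.eqb i j); lra.
    + rewrite (fsum_single _ _ j Hj). unfold e; rewrite Nat.eqb_refl; auto.
      intros i _ Hne. unfold e. destruct (Nat.eqb_spec i j); [lia|auto].
    + fold p. rewrite (countnz_ext _ _ (fun c => haar m j (S c))).
      assert (H := countnz_haar_tail m j Hj). fold p in H. lia.
      intros i _. unfold DbarT. fold p. rewrite (fsum_single _ _ j Hj).
      unfold e; rewrite Nat.eqb_refl; ring.
      intros i0 _ Hne. unfold e. destruct (Nat.eqb_spec i0 j); [lia|ring].
  - exists N. exact Hcj.
Qed.
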